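(* Let $p,q,s,t$ be non-negative integers with $t\le s\le p+q$. Then \[ \binom{p+q+t}{s}\binom{s}{t}=\sum_{\substack{a+c=s,\ n+r=t\\ 0\le n\le a,\ 0\le r\le c}}\binom{p+n}{a}\binom{a}{n}\binom{q+r}{c}\binom{c}{r}\;-\;\sum_{\substack{a+c=s-1,\ n+r=t-1\\ 0\le n\le a,\ 0\le r\le c}}\binom{p+n}{a}\binom{a}{n}\binom{q+r}{c}\binom{c}{r}, \] where all summation indices are non-negative integers. *)

(* Defs.v *)
From mathcomp Require Import all_boot all_order all_algebra.
Set Implicit Arguments. Unset Strict Implicit. Unset Printing Implicit Defensive.
Import GRing.Theory Num.Theory.

Definition term (p q a c n r : nat) : nat :=
  'C(p + n, a) * 'C(a, n) * 'C(q + r, c) * 'C(c, r).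

Definition Ssum (p q S T : nat) : nat :=
  \sum_(a < S.+1) \sum_(c < S.+1) \sum_(n < T.+1) \sum_(r < T.+1)
    (if [&& a + c == S, n + r == T, n <= a & r <= c]
     then term p q a c n r else 0).

(* Sum over a+c = s-1, n+r = t-1 (as integers: empty when s = 0 or t = 0),
   i.e. a+c+1 = s, n+r+1 = t. *)
Definition Ssum_pred (p q s t : nat) : nat :=
  \sum_(a < s.+1) \sum_(c < s.+1) \sum_(n < t.+1) \sum_(r < t.+1)
    (if [&& a + c + 1 == s, n + r + 1 == t, n <= a & r <= c]
     then term p q a c n r else 0).

(* Main.v *)
Require Import Defs.
From mathcomp Require Import all_boot all_order all_algebra zify ring.
Import GRing.Theory Num.Theory.

Lemma binm m k i : 'C(m + k, i + k) * 'C(i + k, k) = 'C(m + k, k) * 'C(m, i).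
Proof.
case: (leqP i m) => him; last first.
  by rewrite (bin_small him) muln0 bin_small ?muln0 ?mul0n // ltn_add2r.
apply/eqP; rewrite -(@eqn_pmul2r (k`! * i`! * (m - i)`!)); last first.
  by rewrite !muln_gt0 !fact_gt0.
have e1 : 'C(i + k, k) * (k`! * i`!) = (i + k)`!.
  by rewrite -(bin_fact (leq_addl i k)) addnK.
have e2 : 'C(m + k, i + k) * ((i + k)`! * (m - i)`!) = (m + k)`!.
  by rewrite -(bin_fact (_ : i + k <= m + k)) ?leq_add2r // subnDr.
have e3 : 'C(m, i) * (i`! * (m - i)`!) = m`!.
  by rewrite bin_fact.
have e4 : 'C(m + k, k) * (k`! * m`!) = (m + k)`!.
  by rewrite -(bin_fact (leq_addl m k)) addnK.
apply/eqP.
transitivity ('C(m + k, i + k) * ('C(i + k, k) * (k`! * i`!)) * (m - i)`!); first ring.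
rewrite e1 -mulnA e2.
rewrite -e4 -e3; ring.
Qed.

Definition A p q T := \sum_(n < T.+1) 'C(p + n, n) * 'C(q + (T - n), T - n).

Lemma Aval p q T : A p q T = 'C(p + q + T.+1, T).
Proof.
elim: q T => [|q IHq] T.
  rewrite /A; under eq_bigr => n _ do rewrite add0n binn muln1.
  elim: T => [|T IH].
  by rewrite big_ord_recr big_ord0 !bin0.
  rewrite big_ord_recr /= IH.
  by rewrite addn0 (addnS _ T.+1) binS addnC addnS.
elim: T => [|T IHT].
  by rewrite /A big_ord_recr big_ord0 /= !bin0.
have -> : A p q.+1 T.+1 = A p q T.+1 + A p q.+1 T.
  rewrite /A big_ord_recr /= subnn !addn0 !bin0.
  rewrite [X in _ = X + _]big_ord_recr /= subnn addn0 !bin0 addnAC.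
  congr (_ + _); rewrite -big_split /=; apply: eq_bigr => i _.
  have hi : (i <= T)%N by rewrite -ltnS.
  rewrite -mulnDr subSn // !addnS binS; congr (_ * (_ + _)).
rewrite IHT IHq.
have -> : p + q.+1 + T.+2 = (p + q + T.+2).+1 by lia.
rewrite binS; congr (_ + 'C(_,_)); lia.
Qed.
Lemma collapse (m S a : nat) (g : nat -> nat) : (S - a < m)%N ->
  \sum_(c < m) (if a + c == S then g c else 0) = if (a <= S)%N then g (S - a) else 0.
Proof.
move=> hm; case: (leqP a S) => haS.
  rewrite (bigD1 (Ordinal hm)) //= subnKC // eqxx big1 ?addn0 // => c hc.
  case: eqP => // e; move: hc; case/negP; apply/eqP/val_inj => /=; lia.
by rewrite big1 // => c _; case: eqP => // e; lia.
Qed.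

Lemma pullif I (r : seq I) (P : pred I) (b : bool) (f : I -> nat) :
  \sum_(i <- r | P i) (if b then f i else 0) = if b then \sum_(i <- r | P i) f i else 0.
Proof. by case: b => //; rewrite big1. Qed.

Lemma trunc m S (h : nat -> nat) : (S < m)%N ->
  \sum_(a < m) (if (a <= S)%N then h a else 0) = \sum_(a < S.+1) h a.
Proof.
move=> hm; rewrite -(subnKC hm) big_split_ord /= [X in _ + X]big1 ?addn0.
  by apply: eq_bigr => a _; rewrite /= -ltnS ltn_ord.
by move=> a _ /=; case: ifP => //; lia.
Qed.

Lemma core p q m1 m2 S T : (S < m1)%N -> (T < m2)%N ->
  \sum_(a < m1) \sum_(c < m1) \sum_(n < m2) \sum_(r < m2)
    (if [&& a + c == S, n + r == T, n <= a & r <= c] then term p q a c n r else 0)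
  = \sum_(a < S.+1) \sum_(n < T.+1) term p q a (S - a) n (T - n).
Proof.
move=> h1 h2.
rewrite -(@trunc m1 S (fun a => \sum_(n < T.+1) term p q a (S - a) n (T - n)) h1); apply: eq_bigr => a _.
rewrite exchange_big /=.
rewrite -(@trunc m2 T (fun n => term p q a (S - a) n (T - n)) h2) -pullif; apply: eq_bigr => n _.
have E : forall c r : nat,
  (if [&& a + c == S, n + r == T, n <= a & r <= c] then term p q a c n r else 0)
  = if a + c == S then (if n + r == T then term p q a c n r else 0) else 0.
  move=> c r; case: (a + c == S); case: (n + r == T) => //=.
  case: (leqP n a) => hn; case: (leqP r c) => hr //=;
    by rewrite /term ?(bin_small hn) ?(bin_small hr) ?muln0 ?mul0n.
under eq_bigr => c _ do under eq_bigr => r _ do rewrite E.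
under eq_bigr => c _ do rewrite pullif.
rewrite (@collapse m1 S a (fun c : nat => \sum_(i < m2) (if n + i == T then term p q a c n i else 0))); last lia.
case: (leqP a S) => haS //.
by rewrite (@collapse m2 T n (fun r : nat => term p q a (S - a) n r)); last lia.
Qed.
Lemma inner p q S T n : (n <= T)%N -> (T <= S)%N ->
  \sum_(a < S.+1) term p q a (S - a) n (T - n)
  = 'C(p + q, S - T) * ('C(p + n, n) * 'C(q + (T - n), T - n)).
Proof.
move=> hn hT.
rewrite -(big_mkord xpredT (fun a => term p q a (S - a) n (T - n))).
rewrite (@big_cat_nat _ _ _ n) //=; last lia.
rewrite [X in X + _]big1_seq ?add0n; last first.
  move=> a /andP[_]; rewrite mem_index_iota => /andP[_ ha].
  by rewrite /term (bin_small ha) muln0 mul0n mul0n.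
rewrite -{1}(add0n n) big_addn.
rewrite (@big_cat_nat _ _ _ (S - T).+1) //=; last lia.
rewrite [X in _ + X]big1_seq ?addn0; last first.
  move=> i /andP[_]; rewrite mem_index_iota => /andP[hi hi2].
  rewrite /term (@bin_small (S - (i + n)) (T - n)) ?muln0 //; lia.
rewrite big_mkord -binomial.Vandermonde big_distrl /=; apply: eq_bigr => i _.
have hi : (i <= S - T)%N by rewrite -ltnS.
rewrite /term.
have -> : S - (i + n) = (S - T - i) + (T - n) by lia.
rewrite binm.
rewrite -(mulnA _ 'C(q + (T - n), _)) binm.
ring.
Qed.

Lemma Gval p q S T : (T <= S)%N ->
  \sum_(a < S.+1) \sum_(n < T.+1) term p q a (S - a) n (T - n)
  = 'C(p + q, S - T) * 'C(p + q + T.+1, T).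
Proof.
move=> hT; rewrite -Aval /A exchange_big big_distrr /=.
apply: eq_bigr => n _; apply: inner hT; by rewrite -ltnS ltn_ord.
Qed.

Local Open Scope ring_scope.

Theorem proposition4p1 (p q s t : nat) (hts : (t <= s)%N) (hs : (s <= p + q)%N) :
  (('C(p + q + t, s) * 'C(s, t))%N%:Z : int)
  = (Ssum p q s t)%:Z - (Ssum_pred p q s t)%:Z.
Proof.
have HS : forall S T, (T <= S)%N ->
    Ssum p q S T = ('C(p + q, S - T) * 'C(p + q + T.+1, T))%N.
  by move=> S T h; rewrite /Ssum core // Gval.
case: t hts => [|t] hts.
  have -> : Ssum_pred p q s 0 = 0%N.
    rewrite /Ssum_pred; apply: big1 => a _; apply: big1 => c _.
    apply: big1 => n _; apply: big1 => r _.
    by rewrite !addn1 /= andbF.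
  by rewrite HS // subr0 subn0 addn0 !bin0 !muln1.
case: s hts hs => [|s] hts hs; first by [].
have -> : Ssum_pred p q s.+1 t.+1 = ('C(p + q, s - t) * 'C(p + q + t.+1, t))%N.
  rewrite -Gval // -(@core p q s.+2 t.+2) //.
  rewrite /Ssum_pred; apply: eq_bigr => a _; apply: eq_bigr => c _.
  apply: eq_bigr => n _; apply: eq_bigr => r _.
  by rewrite !addn1 !eqSS.
rewrite HS //.
have e : ('C(p + q, s.+1 - t.+1) * 'C(p + q + t.+2, t.+1)
   = 'C(p + q + t.+1, s.+1) * 'C(s.+1, t.+1) + 'C(p + q, s - t) * 'C(p + q + t.+1, t))%N.
  have -> : s.+1 = (s - t + t.+1)%N by lia.
  rewrite binm.
  have -> : (s - t + t.+1 - t.+1 = s - t)%N by lia.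
  have -> : (p + q + t.+2 = (p + q + t.+1).+1)%N by lia.
  rewrite binS; ring.
by rewrite e PoszD addrK.
Qed.
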